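(* Under the hypotheses of Lemma 3.5 (i.e., $\min\{d_1,\dots,d_{L-1}\}\ge d_{\min}$, $\bm\sigma^*\in\mathcal A_{\rm sort}\setminus\{\bm0\}$, $\mathrm{dist}(\bm W,\mathcal W_{\bm\sigma^*})<\sigma^*_{\min}/2$), for every $l\in[L]$, $$\big\|(\bm W_l\bm W_l^T)^{L-1}\bm W_l-\sqrt\lambda\,\bm W_{L:l+1}^T\bm Y\bm W_{l-1:1}^T+\lambda\bm W_l\big\|_F\le c_1\|\nabla G(\bm W)\|_F,$$ where $c_1:=\max_{l\in[L]}\Big\{\big(\tfrac{3\sigma^*_{\max}}{2}\big)^{2L-2}\frac{(L-l)(L-l+1)+(l-1)l}{2\sqrt2\lambda}+\tfrac12\Big\}$.
   Context: Same setting as Lemma 3.5: $G(\bm W)=\|\bm W_L\cdots\bm W_1-\sqrt\lambda\bm Y\|_F^2+\lambda\sum_l\|\bm W_l\|_F^2$ with $\bm Y$ the $d_L\times d_0$ matrix with diagonal $y_1\ge\dots\ge y_{d_{\min}}\ge0$; $\bm W_{i:j}=\bm W_i\cdots\bm W_j$ for $i\ge j$, with the conventions $\bm W_{0:1}=\bm I$ and $\bm W_{L:L+1}=\bm I$; $\mathcal A_{\rm sort}$, $\mathcal W_{\bm\sigma^*}$, $\sigma^*_{\min}$, $\sigma^*_{\max}$ defined as in Lemma 3.5: $\mathcal A=\{\bm a\in\mathbb R^{d_{\min}}:a_i^{2L-1}-\sqrt\lambda y_ia_i^{L-1}+\lambda a_i=0,a_i\ge0\}$, $\mathcal A_{\rm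 sort}$ = set of nonincreasing rearrangements of elements of $\mathcal A$, and $\mathcal W_{\bm\sigma^*}$ the set of tuples $\bm W_1=\bm Q_2\bm\Sigma_1\mathrm{BlkD}(\bm\Pi,\bm I)\mathrm{BlkD}(\bm O_1,\dots,\bm O_{p_Y+1})$, $\bm W_l=\bm Q_{l+1}\bm\Sigma_l\bm Q_l^T$, $\bm W_L=\mathrm{BlkD}(\bm O_1^T,\dots,\bm O_{p_Y}^T,\widehat{\bm O}_{p_Y+1}^T)\mathrm{BlkD}(\bm\Pi^T,\bm I)\bm\Sigma_L\bm Q_L^T$ with $\bm\Sigma_l$ having top-left block $\mathrm{diag}(\bm\sigma^* )$, $\bm\Pi$ a permutation with $\bm\Pi^T\bm\sigma^*\in\mathcal A$, and arbitrary orthogonal $\bm Q_l\in\mathcal O^{d_{l-1}}$, $\bm O_k\in\mathcal O^{h_k}$ (blocks matching the multiplicities $h_k$ of the distinct positive $y$'s), $\bm O_{p_Y+1}\in\mathcal O^{d_0-r_Y}$, $\widehat{\bm O}_{p_Y+1}\in\mathcal O^{d_L-r_Y}$. *)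

(* Defs.v *)
From HB Require Import structures.
From mathcomp Require Import all_boot all_order all_algebra all_fingroup.
From mathcomp Require Import reals.
Set Implicit Arguments. Unset Strict Implicit. Unset Printing Implicit Defensive.
Import Order.TTheory GRing.Theory Num.Theory.
Local Open Scope ring_scope.

(* Indexing convention: the paper's W_{k+1} is our [W k : 'M_(d k.+1, d k)],
   for k = 0, ..., L-1; d 0, ..., d L are the widths d_0, ..., d_L. *)

Definition dmin (L : nat) (d : nat -> nat) : nat := minn (d 0%N) (d L).

Definition mxn (R : realType) m n (A : 'M[R]_(m, n)) (i j : nat) : R :=
  match (insub i : option 'I_m), (insub j : option 'I_n) with
  | Some i', Some j' => A i' j'
  | _, _ => 0
  end.

Definition vn (R : realType) m (v : 'cV[R]_m) (i : nat) : R :=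
  match (insub i : option 'I_m) with Some i' => v i' 0 | None => 0 end.

Definition eye (R : realType) m n : 'M[R]_(m, n) := \matrix_(i, j) ((i : nat) == j)%:R.

(* prodW W j i = W_{i:j+1} in the paper's notation, i.e. W_i ... W_{j+1}
   (paper indices), for j <= i; prodW W i i = I. *)
Fixpoint prodW (R : realType) (d : nat -> nat) (W : forall k, 'M[R]_(d k.+1, d k))
  (j i : nat) {struct i} : 'M[R]_(d i, d j) :=
  match i as i0 return 'M[R]_(d i0, d j) with
  | 0 => eye R _ _
  | i'.+1 => if (j <= i')%N then W i' *m prodW W j i' else eye R _ _
  end.

Definition frob (R : realType) m n (A : 'M[R]_(m, n)) : R :=
  Num.sqrt (\sum_i \sum_j A i j ^+ 2).

(* Y : d_L x d_0, diagonal y_1, ..., y_{d_min} (our y 0, ..., y (dmin-1)) *)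
Definition Ymx (R : realType) (L : nat) (d : nat -> nat) (y : nat -> R) : 'M[R]_(d L, d 0%N) :=
  \matrix_(i, j) if ((i : nat) == j) && (i < dmin L d)%N then y i else 0.

(* gradient of G w.r.t. the paper's W_{k+1}:
   2 W_{L:k+2}^T (W_{L:1} - sqrt(lam) Y) W_{k:1}^T + 2 lam W_{k+1} *)
Definition gradk (R : realType) (L : nat) (d : nat -> nat) (lam : R) (y : nat -> R)
  (W : forall k, 'M[R]_(d k.+1, d k)) (k : nat) : 'M[R]_(d k.+1, d k) :=
  2 *: ((prodW W k.+1 L)^T *m (prodW W 0 L - Num.sqrt lam *: Ymx L d y) *m (prodW W 0 k)^T)
  + (2 * lam) *: W k.

Definition gradnorm (R : realType) (L : nat) (d : nat -> nat) (lam : R) (y : nat -> R)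
  (W : forall k, 'M[R]_(d k.+1, d k)) : R :=
  Num.sqrt (\sum_(k < L) frob (gradk L lam y W k) ^+ 2).

Definition lhsk (R : realType) (L : nat) (d : nat -> nat) (lam : R) (y : nat -> R)
  (W : forall k, 'M[R]_(d k.+1, d k)) (k : nat) : 'M[R]_(d k.+1, d k) :=
  ((W k *m (W k)^T) ^+ (L - 1)) *m W k
  - Num.sqrt lam *: ((prodW W k.+1 L)^T *m Ymx L d y *m (prodW W 0 k)^T)
  + lam *: W k.

Definition inA (R : realType) (L : nat) (d : nat -> nat) (lam : R) (y : nat -> R)
  (a : 'cV[R]_(dmin L d)) : Prop :=
  forall i : 'I_(dmin L d),
    a i 0 ^+ (2 * L - 1) - Num.sqrt lam * y i * a i 0 ^+ (L - 1) + lam * a i 0 = 0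
    /\ 0 <= a i 0.

Definition inAsort (R : realType) (L : nat) (d : nat -> nat) (lam : R) (y : nat -> R)
  (sig : 'cV[R]_(dmin L d)) : Prop :=
  (forall i j : 'I_(dmin L d), (i <= j)%N -> sig j 0 <= sig i 0) /\
  exists a, inA lam y a /\
    exists s : 'S_(dmin L d), forall i, sig i 0 = a (s i) 0.

Definition sigmax (R : realType) m (sig : 'cV[R]_m) : R := \big[Num.max/0]_(i < m) sig i 0.
Definition sigmin (R : realType) m (sig : 'cV[R]_m) : R :=
  \big[Num.min/(sigmax sig)]_(i < m | 0 < sig i 0) sig i 0.

Definition Sigmak (R : realType) (L : nat) (d : nat -> nat) (sig : 'cV[R]_(dmin L d)) (k : nat)
  : 'M[R]_(d k.+1, d k) :=
  \matrix_(i, j) if (i : nat) == j then vn sig i else 0.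

Definition orth (R : realType) m (O : 'M[R]_m) : Prop := O *m O^T = 1%:M.

Definition yext (R : realType) (L : nat) (d : nat -> nat) (y : nat -> R) (i : nat) : R :=
  if (i < dmin L d)%N then y i else 0.

(* O = BlkD(O_1, ..., O_{p_Y}, O_{p_Y+1}) block structure: blocks are the groups of
   (consecutive, since y is sorted) indices with equal positive y value, plus the
   block of the remaining indices (where y is zero / absent). *)
Definition blockdiag (R : realType) (L : nat) (d : nat -> nat) (y : nat -> R) m (O : 'M[R]_m) : Prop :=
  forall i j : 'I_m, O i j != 0 -> yext L d y i = yext L d y j.

Definition blkP (R : realType) (L : nat) (d : nat -> nat) m (P : 'M[R]_(dmin L d)) : 'M[R]_m :=
  \matrix_(i, j) if ((i : nat) < dmin L d)%N && ((j : nat) < dmin L d)%N then mxn P i j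
                 else ((i : nat) == j)%:R.

Definition inWset (R : realType) (L : nat) (d : nat -> nat) (lam : R) (y : nat -> R)
  (sig : 'cV[R]_(dmin L d)) (V : forall k, 'M[R]_(d k.+1, d k)) : Prop :=
  match L with
  | n.+2 =>
    exists s : 'S_(dmin L d),
      inA lam y ((perm_mx s)^T *m sig) /\
    exists Q : forall k, 'M[R]_(d k),   (* Q k = paper's Q_{k+1} *)
      (forall k, (1 <= k <= n.+1)%N -> orth (Q k)) /\
    exists (O : 'M[R]_(d 0%N)) (Oh : 'M[R]_(d n.+2)),
      orth O /\ orth Oh /\ blockdiag L d y O /\ blockdiag L d y Oh /\
      (forall i j : nat, 0 < yext L d y i -> 0 < yext L d y j -> mxn O i j = mxn Oh i j) /\
      V 0%N = Q 1%N *m Sigmak sig 0 *m blkP (d 0%N) (perm_mx s) *m O /\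
      (forall k, (1 <= k <= n)%N -> V k = Q k.+1 *m Sigmak sig k *m (Q k)^T) /\
      V n.+1 = Oh^T *m blkP (d n.+2) (perm_mx s)^T *m Sigmak sig n.+1 *m (Q n.+1)^T
  | _ => False
  end.

Definition tdist (R : realType) (L : nat) (d : nat -> nat)
  (W V : forall k, 'M[R]_(d k.+1, d k)) : R :=
  Num.sqrt (\sum_(k < L) frob (W k - V k) ^+ 2).

Definition c1 (R : realType) (L : nat) (lam : R) m (sig : 'cV[R]_m) : R :=
  \big[Num.max/0]_(k < L)
    ((3 * sigmax sig / 2) ^+ (2 * L - 2)
       * ((L - k.+1) * (L - k.+1).+1 + k * k.+1)%N%:R / (2 * Num.sqrt 2 * lam) + 1 / 2).

(* Main.v *)
Require Import Defs.
From HB Require Import structures.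
From mathcomp Require Import all_boot all_order all_algebra all_fingroup.
From mathcomp Require Import reals.
From mathcomp Require Import ring lra zify.
Set Implicit Arguments. Unset Strict Implicit. Unset Printing Implicit Defensive.
Import Order.TTheory GRing.Theory Num.Theory.
Local Open Scope ring_scope.

Section Frob.
Variable R : realType.

Lemma CS (I : finType) (a b : I -> R) :
  (\sum_i a i * b i) ^+ 2 <= (\sum_i a i ^+ 2) * (\sum_i b i ^+ 2).
Proof.
set c := \sum_i a i * b i; set al := \sum_i a i ^+ 2; set be := \sum_i b i ^+ 2.
have al0 : 0 <= al by apply: sumr_ge0 => i _; exact: sqr_ge0.
have be0 : 0 <= be by apply: sumr_ge0 => i _; exact: sqr_ge0.
have [al00|alp] := eqVneq al 0.
  rewrite al00; have z : forall i, a i = 0.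
    move=> i; apply/eqP; rewrite -sqrf_eq0; apply/eqP.
    by apply: (psumr_eq0P (P := xpredT) (F := fun i => a i ^+ 2)) => // j _; exact: sqr_ge0.
  rewrite /c big1 ?mul0r ?expr0n //= => i _; by rewrite z mul0r.
have alp' : 0 < al by rewrite lt_def alp al0.
have key : \sum_i (c * a i - al * b i) ^+ 2 = al * (al * be - c ^+ 2).
  transitivity (\sum_i (c ^+ 2 * a i ^+ 2 + (- (2 * c * al)) * (a i * b i) + al ^+ 2 * b i ^+ 2)).
    by apply: eq_bigr => i _; ring.
  rewrite !big_split /= -!mulr_sumr -/al -/be -/c; ring.
have : 0 <= al * (al * be - c ^+ 2).
  by rewrite -key; apply: sumr_ge0 => i _; exact: sqr_ge0.
by rewrite pmulr_rge0 // subr_ge0.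
Qed.

Definition fs m n (A : 'M[R]_(m,n)) : R := \sum_i \sum_j A i j ^+ 2.

Lemma fsE m n (A : 'M[R]_(m,n)) : fs A = \sum_(p : 'I_m * 'I_n) A p.1 p.2 ^+ 2.
Proof. by rewrite /fs pair_big. Qed.

Lemma fs_ge0 m n (A : 'M[R]_(m,n)) : 0 <= fs A.
Proof. apply: sumr_ge0 => i _; apply: sumr_ge0 => j _; exact: sqr_ge0. Qed.

Lemma frob2 m n (A : 'M[R]_(m,n)) : frob A ^+ 2 = fs A.
Proof. by rewrite /frob sqr_sqrtr // fs_ge0. Qed.

Lemma frob_ge0 m n (A : 'M[R]_(m,n)) : 0 <= frob A.
Proof. exact: sqrtr_ge0. Qed.

Lemma frob_sqrt m n (A : 'M[R]_(m,n)) : frob A = Num.sqrt (fs A).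
Proof. by []. Qed.

Lemma sqrt_le_sq (x y : R) : 0 <= y -> x <= y ^+ 2 -> Num.sqrt x <= y.
Proof.
move=> y0 h; rewrite -(ger0_norm y0) -sqrtr_sqr ler_sqrt //; exact: sqr_ge0.
Qed.

Lemma frob_tr m n (A : 'M[R]_(m,n)) : frob A^T = frob A.
Proof. by rewrite /frob exchange_big; congr Num.sqrt; apply: eq_bigr => i _; apply: eq_bigr => j _; rewrite mxE. Qed.

Lemma frobZ m n a (A : 'M[R]_(m,n)) : frob (a *: A) = `|a| * frob A.
Proof.
rewrite /frob -sqrtr_sqr -sqrtrM ?sqr_ge0 // mulr_sumr; congr Num.sqrt.
apply: eq_bigr => i _; rewrite mulr_sumr; apply: eq_bigr => j _; rewrite mxE; ring.
Qed.

Lemma frobN m n (A : 'M[R]_(m,n)) : frob (- A) = frob A.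
Proof. by rewrite -scaleN1r frobZ normrN normr1 mul1r. Qed.

Lemma frob_ip m n (A B : 'M[R]_(m,n)) :
  \sum_i \sum_j A i j * B i j <= frob A * frob B.
Proof.
rewrite pair_big /=.
have h := CS (fun p : 'I_m * 'I_n => A p.1 p.2) (fun p => B p.1 p.2).
apply: (le_trans (ler_norm _)).
rewrite -sqrtr_sqr (frob_sqrt A) (frob_sqrt B) -sqrtrM ?fs_ge0 // !fsE ler_sqrt //.
apply: mulr_ge0; apply: sumr_ge0 => i _; exact: sqr_ge0.
Qed.

Lemma frobD m n (A B : 'M[R]_(m,n)) : frob (A + B) <= frob A + frob B.
Proof.
rewrite frob_sqrt; apply: sqrt_le_sq; first by rewrite addr_ge0 ?frob_ge0.
have -> : fs (A + B) = fs A + 2 * (\sum_i \sum_j A i j * B i j) + fs B.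
  rewrite /fs mulr_sumr -!big_split /=; apply: eq_bigr => i _.
  rewrite mulr_sumr -!big_split /=; apply: eq_bigr => j _; rewrite mxE; ring.
rewrite sqrrD !frob2.
have := frob_ip A B; lra.
Qed.

Lemma frobB m n (A B : 'M[R]_(m,n)) : frob (A - B) <= frob A + frob B.
Proof. by rewrite -(frobN B); apply: frobD. Qed.

Lemma frobM m n p (A : 'M[R]_(m,n)) (B : 'M[R]_(n,p)) : frob (A *m B) <= frob A * frob B.
Proof.
rewrite !frob_sqrt -sqrtrM ?fs_ge0 // ler_sqrt; last by apply: mulr_ge0; apply: fs_ge0.
rewrite /fs mulr_suml; apply: ler_sum => i _.
rewrite [X in _ <= _ * X](exchange_big _ _ _ _ _ (fun k j => B k j ^+ 2)) mulr_sumr /=; apply: ler_sum => j _.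
rewrite mxE; exact: (CS (fun k => A i k) (fun k => B k j)).
Qed.


Definition opb (s : R) m n (M : 'M[R]_(m,n)) :=
  [/\ 0 <= s, (forall p (X : 'M[R]_(n,p)), frob (M *m X) <= s * frob X) &
      (forall p (X : 'M[R]_(p,m)), frob (X *m M) <= s * frob X)].

Lemma opb_ge0 s m n (M : 'M[R]_(m,n)) : opb s M -> 0 <= s.
Proof. by case. Qed.

Lemma opb_frob m n (M : 'M[R]_(m,n)) : opb (frob M) M.
Proof.
split; first exact: frob_ge0.
  by move=> p X; apply: frobM.
by move=> p X; rewrite mulrC; apply: frobM.
Qed.

Lemma opb_le s t m n (M : 'M[R]_(m,n)) : s <= t -> opb s M -> opb t M.
Proof.
move=> st [s0 h1 h2]; split; first exact: le_trans st.
  by move=> p X; apply: (le_trans (h1 _ X)); apply: ler_wpM2r => //; exact: frob_ge0.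
by move=> p X; apply: (le_trans (h2 _ X)); apply: ler_wpM2r => //; exact: frob_ge0.
Qed.

Lemma opb_mul s t m n k (M : 'M[R]_(m,n)) (N : 'M[R]_(n,k)) :
  opb s M -> opb t N -> opb (s * t) (M *m N).
Proof.
move=> [s0 a1 a2] [t0 b1 b2]; split; first exact: mulr_ge0.
  move=> p X; rewrite -mulmxA; apply: (le_trans (a1 _ _)); rewrite -mulrA.
  by apply: ler_wpM2l => //; exact: b1.
move=> p X; rewrite mulmxA; apply: (le_trans (b2 _ _)).
rewrite (mulrC s t) -mulrA; apply: ler_wpM2l => //; exact: a2.
Qed.

Lemma opb_add s t m n (M N : 'M[R]_(m,n)) :
  opb s M -> opb t N -> opb (s + t) (M + N).
Proof.
move=> [s0 a1 a2] [t0 b1 b2]; split; first exact: addr_ge0.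
  move=> p X; rewrite mulmxDl; apply: (le_trans (frobD _ _)).
  by rewrite mulrDl; apply: lerD.
move=> p X; rewrite mulmxDr; apply: (le_trans (frobD _ _)).
by rewrite mulrDl; apply: lerD.
Qed.

Lemma opb_tr s m n (M : 'M[R]_(m,n)) : opb s M -> opb s M^T.
Proof.
move=> [s0 a1 a2]; split => //.
  by move=> p X; rewrite -frob_tr trmx_mul trmxK -(frob_tr X); apply: a2.
by move=> p X; rewrite -frob_tr trmx_mul trmxK -(frob_tr X); apply: a1.
Qed.

Lemma opb_1 n : opb 1 (1%:M : 'M[R]_n).
Proof. by split => // p X; rewrite ?mul1mx ?mulmx1 mul1r. Qed.

Lemma opb_pow s k n (M : 'M[R]_k) : opb s M -> opb (s ^+ n) (M ^+ n).
Proof.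
move=> h; elim: n => [|n IH]; first by rewrite !expr0; exact: opb_1.
by rewrite !exprS -mulmxE; apply: opb_mul.
Qed.

Lemma fs_tr m n (A : 'M[R]_(m,n)) : fs A = \tr (A *m A^T).
Proof.
rewrite /fs /mxtrace; apply: eq_bigr => i _; rewrite mxE; apply: eq_bigr => j _.
by rewrite mxE expr2.
Qed.

Lemma frob_orthL m p (O : 'M[R]_m) (X : 'M[R]_(m,p)) : orth O -> frob (O *m X) = frob X.
Proof.
move=> hO; have hO' : O^T *m O = 1%:M by apply: mulmx1C.
rewrite !frob_sqrt !fs_tr; congr Num.sqrt.
rewrite trmx_mul -mulmxA mxtrace_mulC -!mulmxA hO' mulmx1 //.
Qed.

Lemma frob_orthR m p (O : 'M[R]_m) (X : 'M[R]_(p,m)) : orth O -> frob (X *m O) = frob X.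
Proof.
move=> hO; rewrite !frob_sqrt !fs_tr; congr Num.sqrt.
by rewrite trmx_mul -mulmxA (mulmxA O) hO mul1mx.
Qed.

Lemma opb_orth m (O : 'M[R]_m) : orth O -> opb 1 O.
Proof.
move=> hO; split => // p X; first by rewrite frob_orthL // mul1r.
by rewrite frob_orthR // mul1r.
Qed.

Lemma sum_single (I : finType) (f : I -> R) :
  (forall k1 k2, f k1 != 0 -> f k2 != 0 -> k1 = k2) ->
  (forall k, f k = 0) \/ exists k0, forall k, k != k0 -> f k = 0.
Proof.
move=> u; case: (pickP (fun k => f k != 0)) => [k0 h0|none]; last first.
  by left => k; have := none k => /= /negbFE/eqP.
right; exists k0 => k kk0; apply/eqP; apply: contraNT kk0 => hk.
by apply/eqP; apply: u.
Qed.

Lemma sum_at (I : finType) (F : I -> R) k0 :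
  (forall k, k != k0 -> F k = 0) -> \sum_k F k = F k0.
Proof.
move=> h; rewrite (bigD1 k0) //= big1 ?addr0 // => k /h; done.
Qed.

Lemma sq_single (I : finType) (f : I -> R) :
  (forall k1 k2, f k1 != 0 -> f k2 != 0 -> k1 = k2) ->
  (\sum_k f k) ^+ 2 = \sum_k f k ^+ 2.
Proof.
move=> /sum_single [z|[k0 h]].
  by rewrite !big1 ?expr0n // => k _; rewrite z // expr0n.
rewrite (sum_at h) (@sum_at _ (fun k => f k ^+ 2) k0) // => k /h ->; exact: expr0n.
Qed.

Lemma sqsum_single_le (I : finType) (f : I -> R) (c : R) :
  (forall k1 k2, f k1 != 0 -> f k2 != 0 -> k1 = k2) -> (forall k, `|f k| <= c) ->
  0 <= c -> \sum_k f k ^+ 2 <= c ^+ 2.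
Proof.
move=> u hc c0; rewrite -sq_single //; case: (sum_single u) => [z|[k0 h]].
  by rewrite big1 ?expr0n ?sqr_ge0 // => k _; rewrite z.
rewrite (sum_at h) -real_normK ?num_real //; rewrite lerXn2r ?nnegrE ?normr_ge0 //.
Qed.

Lemma opb_monoL (c : R) m n (M : 'M[R]_(m,n)) :
  (forall i j1 j2, M i j1 != 0 -> M i j2 != 0 -> j1 = j2) ->
  (forall i1 i2 j, M i1 j != 0 -> M i2 j != 0 -> i1 = i2) ->
  (forall i j, `|M i j| <= c) -> 0 <= c ->
  forall p (X : 'M[R]_(n,p)), frob (M *m X) <= c * frob X.
Proof.
move=> hr hc hb c0 p X.
rewrite frob_sqrt -(ger0_norm c0) -sqrtr_sqr -sqrtrM ?sqr_ge0 // ler_sqrt; last first.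
  by apply: mulr_ge0; [exact: sqr_ge0| exact: fs_ge0].
have -> : fs (M *m X) = \sum_i \sum_j \sum_k M i k ^+ 2 * X k j ^+ 2.
  apply: eq_bigr => i _; apply: eq_bigr => j _; rewrite mxE sq_single.
    by apply: eq_bigr => k _; rewrite exprMn.
  move=> k1 k2 h1 h2; apply: (hr i); [move: h1|move: h2]; apply: contraNN => /eqP ->; by rewrite mul0r.
have -> : \sum_i \sum_j \sum_k M i k ^+ 2 * X k j ^+ 2 =
   \sum_k \sum_j \sum_i M i k ^+ 2 * X k j ^+ 2.
  rewrite exchange_big /= (eq_bigr (fun j => \sum_k \sum_i M i k ^+ 2 * X k j ^+ 2)).
    by rewrite exchange_big.
  by move=> j _; rewrite exchange_big.
rewrite /fs [X in _ <= X]mulr_sumr; apply: ler_sum => k _.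
rewrite mulr_sumr; apply: ler_sum => j _.
rewrite -mulr_suml; apply: ler_wpM2r; first exact: sqr_ge0.
by apply: sqsum_single_le => // i1 i2; apply: hc.
Qed.

Lemma opb_mono (c : R) m n (M : 'M[R]_(m,n)) :
  (forall i j1 j2, M i j1 != 0 -> M i j2 != 0 -> j1 = j2) ->
  (forall i1 i2 j, M i1 j != 0 -> M i2 j != 0 -> i1 = i2) ->
  (forall i j, `|M i j| <= c) -> 0 <= c -> opb c M.
Proof.
move=> hr hc hb c0; split => //; first exact: opb_monoL.
move=> p X; rewrite -frob_tr trmx_mul -(frob_tr X); apply: opb_monoL => //.
- by move=> i j1 j2; rewrite !mxE; apply: hc.
- by move=> i1 i2 j; rewrite !mxE; apply: hr.
- by move=> i j; rewrite mxE.
Qed.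

End Frob.

Lemma frob0 (R : realType) m n : frob (0 : 'M[R]_(m,n)) = 0.
Proof. by rewrite /frob big1 ?sqrtr0 // => i _; rewrite big1 // => j _; rewrite mxE expr0n. Qed.
Section Core.
Variable R : realType.
Variable d : nat -> nat.
Variable W : forall k, 'M[R]_(d k.+1, d k).

Lemma eye_sq m : eye R m m = 1%:M.
Proof. by apply/matrixP => i j; rewrite !mxE. Qed.

Lemma prodW_id i : prodW W i i = 1%:M.
Proof. case: i => [|i] /=; first exact: eye_sq. by rewrite ltnn eye_sq. Qed.

Lemma prodW_S j i : (j <= i)%N -> prodW W j i.+1 = W i *m prodW W j i.
Proof. by move=> h /=; rewrite h. Qed.

Lemma prodW_split j k i : (j <= k)%N -> (k < i)%N ->
  prodW W j i = prodW W k.+1 i *m W k *m prodW W j k.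
Proof.
move=> jk; elim: i => [|i IH] // ki.
have ji : (j <= i)%N by apply: leq_trans jk _.
rewrite prodW_S //; case: (ltngtP k i) => [lt|gt|eq].
- by rewrite IH // prodW_S // !mulmxA.
- by move: ki; rewrite ltnS leqNgt gt.
- by subst k; rewrite prodW_id mul1mx.
Qed.

Lemma pcomm m n (M : 'M[R]_(m,n)) k : M^T *m (M *m M^T) ^+ k = (M^T *m M) ^+ k *m M^T.
Proof.
elim: k => [|k IH]; first by rewrite !expr0 mulmx1 mul1mx.
by rewrite !exprSr -!mulmxE !mulmxA IH -!mulmxA.
Qed.

Lemma pcomm2 m n (M : 'M[R]_(m,n)) k : M^T *m (M *m M^T) ^+ k *m M = (M^T *m M) ^+ k.+1.
Proof. by rewrite pcomm exprSr -mulmxE mulmxA. Qed.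

Lemma pcommT m n (M : 'M[R]_(m,n)) k : M *m (M^T *m M) ^+ k = (M *m M^T) ^+ k *m M.
Proof. by have := pcomm M^T k; rewrite trmxK. Qed.

Lemma pcomm2T m n (M : 'M[R]_(m,n)) k : M *m (M^T *m M) ^+ k *m M^T = (M *m M^T) ^+ k.+1.
Proof. by have := pcomm2 M^T k; rewrite trmxK. Qed.

Lemma lhs_split L lam y k : (k < L)%N ->
  lhsk L lam y W k = 2^-1 *: gradk L lam y W k -
   ((prodW W k.+1 L)^T *m prodW W k.+1 L *m W k *m (prodW W 0 k *m (prodW W 0 k)^T)
     - (W k *m (W k)^T) ^+ (L - 1) *m W k).
Proof.
move=> kL; rewrite /lhsk /gradk (@prodW_split 0 k L) //.
set A := prodW W k.+1 L; set B := prodW W 0 k; set Y := Ymx L d y.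
rewrite scalerDr !scalerA mulVf ?pnatr_eq0 // scale1r mulrA mulVf ?pnatr_eq0 // mul1r.
rewrite mulmxBr mulmxBl -!scalemxAr -scalemxAl !mulmxA.
set P := A^T *m A *m W k *m B *m B^T.
set Q := (W k *m (W k)^T) ^+ (L - 1) *m W k.
set Z := A^T *m Y *m B^T.
by rewrite opprB [RHS]addrC !addrA subrK.
Qed.

Lemma D_ident L lam y j : (j.+1 < L)%N ->
  (2 * lam) *: ((W j.+1)^T *m W j.+1 - W j *m (W j)^T) =
  (W j.+1)^T *m gradk L lam y W j.+1 - gradk L lam y W j *m (W j)^T.
Proof.
move=> jL; rewrite /gradk (@prodW_split j.+1 j.+1 L) // prodW_id mulmx1 prodW_S //.
rewrite mulmxDr mulmxDl !trmx_mul -!scalemxAr -!scalemxAl !mulmxA scalerBr.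
by rewrite opprD addrACA subrr add0r.
Qed.

End Core.
Section Bounds.
Variable R : realType.
Variable d : nat -> nat.
Variable W : forall k, 'M[R]_(d k.+1, d k).
Variables (L : nat) (s eta : R).
Hypothesis s0 : 0 <= s.
Hypothesis hW : forall k, (k < L)%N -> opb s (W k).
Hypothesis hD : forall j, (j.+1 < L)%N ->
  frob ((W j.+1)^T *m W j.+1 - W j *m (W j)^T) <= s * eta.

Definition T (n : nat) : R := (n * n.+1)%:R / 2.

Lemma T0 : T 0 = 0. Proof. by rewrite /T mul0n mul0r. Qed.

Lemma T_S n : T n.+1 = T n + n.+1%:R.
Proof.
rewrite /T; have -> : (n.+1 * n.+2 = n * n.+1 + n.+1 * 2)%N by lia.
by rewrite natrD natrM; field.
Qed.

Lemma pow_diff n k (P Q : 'M[R]_k) : opb (s ^+ 2) P -> opb (s ^+ 2) Q ->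
  frob (P - Q) <= s * eta -> s * frob (P ^+ n - Q ^+ n) <= n%:R * s ^+ (2 * n) * eta.
Proof.
move=> hP hQ hPQ; elim: n => [|n IH]; first by rewrite !expr0 subrr frob0 mulr0 !mul0r.
have -> : P ^+ n.+1 - Q ^+ n.+1 = P *m (P ^+ n - Q ^+ n) + (P - Q) *m Q ^+ n.
  by rewrite !exprS -!mulmxE mulmxBr mulmxBl addrA subrK.
have hQn := opb_pow n hQ.
case: hP => _ hP1 _; case: hQn => _ _ hQ2.
have f1 := hP1 _ (P ^+ n - Q ^+ n); have f2 := hQ2 _ (P - Q).
set f := frob (P ^+ n - Q ^+ n) in IH f1 *; set g := frob (P - Q) in hPQ f2 *.
set S := s ^+ (2 * n) in IH *.
have eS : (s ^+ 2) ^+ n = S by rewrite /S exprM.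
rewrite eS in f2.
have S0 : 0 <= S by rewrite /S exprn_ge0.
have ee : s ^+ (2 * n.+1) = s ^+ 2 * S by rewrite /S -exprD; congr (_ ^+ _); lia.
rewrite ee.
apply: (le_trans (ler_wpM2l s0 (frobD _ _))).
apply: (le_trans (ler_wpM2l s0 (lerD f1 f2))).
have h1 : s ^+ 2 * (s * f) <= s ^+ 2 * (n%:R * S * eta) by apply: ler_wpM2l => //; exact: sqr_ge0.
have h2 : S * (s * g) <= S * (s * (s * eta)) by apply: ler_wpM2l => //; apply: ler_wpM2l.
have -> : s * (s ^+ 2 * f + S * g) = s ^+ 2 * (s * f) + S * (s * g) by ring.
apply: (le_trans (lerD h1 h2)); rewrite -natr1.
rewrite [X in _ <= X](_ : _ = s ^+ 2 * (n%:R * S * eta) + S * (s * (s * eta))) //; ring.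
Qed.

Lemma opbP k : (k < L)%N -> opb (s ^+ 2) ((W k)^T *m W k).
Proof. by move=> kL; rewrite expr2; apply: opb_mul; [apply: opb_tr|]; apply: hW. Qed.

Lemma opbQ k : (k < L)%N -> opb (s ^+ 2) (W k *m (W k)^T).
Proof. by move=> kL; rewrite expr2; apply: opb_mul; [|apply: opb_tr]; apply: hW. Qed.

Lemma sandwich m n (E : 'M[R]_m) (M : 'M[R]_(m, n)) :
  opb s M -> frob (M^T *m E *m M) <= s * (s * frob E).
Proof.
move=> hM; have [_ _ a2] := hM; have [_ b1 _] := opb_tr hM.
apply: (le_trans (a2 _ _)); apply: ler_wpM2l => //; exact: b1.
Qed.

Lemma sandwichT m n (E : 'M[R]_n) (M : 'M[R]_(m, n)) :
  opb s M -> frob (M *m E *m M^T) <= s * (s * frob E).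
Proof. by move=> hM; have := sandwich E (opb_tr hM); rewrite trmxK. Qed.

Lemma combine (a f g S : R) (n : nat) :
  s * a <= T n * S * eta -> s * g <= n.+1%:R * (s ^+ 2 * S) * eta ->
  f <= s * (s * a) ->
  s * (f + g) <= T n.+1 * (s ^+ 2 * S) * eta.
Proof.
move=> h1 h2 h3.
have h4 : s * f <= s ^+ 2 * (T n * S * eta).
  apply: (le_trans (ler_wpM2l s0 h3)).
  rewrite (_ : s * (s * (s * a)) = s ^+ 2 * (s * a)); last by ring.
  by apply: ler_wpM2l => //; exact: sqr_ge0.
rewrite mulrDr T_S; apply: (le_trans (lerD h4 h2)).
rewrite [X in _ <= X](_ : _ = s ^+ 2 * (T n * S * eta) + n.+1%:R * (s ^+ 2 * S) * eta) //; ring.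
Qed.

Lemma E1_bound m : forall k, (k + m.+1 = L)%N ->
  s * frob ((prodW W k.+1 L)^T *m prodW W k.+1 L - (W k *m (W k)^T) ^+ m)
    <= T m * s ^+ (2 * m) * eta.
Proof.
elim: m => [|m IH] k hk.
  have -> : L = k.+1 by lia.
  by rewrite prodW_id trmx1 mulmx1 expr0 subrr frob0 mulr0 T0 !mul0r.
have kL : (k.+1 < L)%N by lia.
have hA : prodW W k.+1 L = prodW W k.+2 L *m W k.+1.
  by rewrite (@prodW_split _ _ W k.+1 k.+1 L) // prodW_id mulmx1.
have IHk := IH k.+1 ltac:(lia).
set A' := prodW W k.+2 L in hA IHk *.
set E := A'^T *m A' - (W k.+1 *m (W k.+1)^T) ^+ m in IHk *.
have -> : (prodW W k.+1 L)^T *m prodW W k.+1 L - (W k *m (W k)^T) ^+ m.+1 =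
   (W k.+1)^T *m E *m W k.+1 + (((W k.+1)^T *m W k.+1) ^+ m.+1 - (W k *m (W k)^T) ^+ m.+1).
  by rewrite hA trmx_mul /E mulmxBr mulmxBl -pcomm2 !mulmxA addrA subrK.
have hp := pow_diff m.+1 (opbP kL) (opbQ (ltnW kL)) (hD kL).
have ee : s ^+ (2 * m.+1) = s ^+ 2 * s ^+ (2 * m) by rewrite -exprD; congr (_ ^+ _); lia.
rewrite ee in hp *.
apply: (le_trans (ler_wpM2l s0 (frobD _ _))).
apply: combine IHk hp _.
exact: sandwich (hW kL).
Qed.

Lemma E2_bound k : (k < L)%N ->
  s * frob (prodW W 0 k *m (prodW W 0 k)^T - ((W k)^T *m W k) ^+ k)
    <= T k * s ^+ (2 * k) * eta.
Proof.
elim: k => [|k IH] kL.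
  by rewrite prodW_id trmx1 mulmx1 expr0 subrr frob0 mulr0 T0 !mul0r.
have kL' : (k < L)%N by lia.
have IHk := IH kL'.
set B := prodW W 0 k in IHk *.
set E := B *m B^T - ((W k)^T *m W k) ^+ k in IHk *.
have -> : prodW W 0 k.+1 *m (prodW W 0 k.+1)^T - ((W k.+1)^T *m W k.+1) ^+ k.+1 =
   W k *m E *m (W k)^T + ((W k *m (W k)^T) ^+ k.+1 - ((W k.+1)^T *m W k.+1) ^+ k.+1).
  by rewrite prodW_S // trmx_mul /E mulmxBr mulmxBl -pcomm2T !mulmxA addrA subrK.
have hDk : frob (W k *m (W k)^T - (W k.+1)^T *m W k.+1) <= s * eta.
  by rewrite -opprB frobN; apply: hD.
have hp := pow_diff k.+1 (opbQ kL') (opbP kL) hDk.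
have ee : s ^+ (2 * k.+1) = s ^+ 2 * s ^+ (2 * k) by rewrite -exprD; congr (_ ^+ _); lia.
rewrite ee in hp *.
apply: (le_trans (ler_wpM2l s0 (frobD _ _))).
apply: combine IHk hp _.
exact: sandwichT (hW kL').
Qed.

Lemma opb_B k : (k <= L)%N -> opb (s ^+ k) (prodW W 0 k).
Proof.
elim: k => [|k IH] kL; first by rewrite prodW_id expr0; exact: opb_1.
by rewrite prodW_S // exprS; apply: opb_mul; [apply: hW | apply: IH; lia].
Qed.

Lemma delta_bound k : (k < L)%N ->
  frob ((prodW W k.+1 L)^T *m prodW W k.+1 L *m W k *m (prodW W 0 k *m (prodW W 0 k)^T)
     - (W k *m (W k)^T) ^+ (L - 1) *m W k)
   <= (T (L - 1 - k) + T k) * s ^+ (2 * (L - 1)) * eta.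
Proof.
move=> kL; set a := (L - 1 - k)%N; have ha : (k + a.+1 = L)%N by rewrite /a; lia.
have h1 := E1_bound ha; have h2 := E2_bound kL.
have hB := opb_B (ltnW kL).
set A := prodW W k.+1 L in h1 *; set B := prodW W 0 k in h2 hB *.
set Qk := W k *m (W k)^T in h1 *; set Pk := (W k)^T *m W k in h2 *.
set E1 := A^T *m A - Qk ^+ a in h1 *; set E2 := B *m B^T - Pk ^+ k in h2 *.
have eL : (L - 1 = a + k)%N by rewrite /a; lia.
have eQ : Qk ^+ a *m W k *m Pk ^+ k = Qk ^+ (a + k) *m W k.
  by rewrite -mulmxA /Pk /Qk pcommT mulmxA exprD.
have -> : A^T *m A *m W k *m (B *m B^T) - Qk ^+ (L - 1) *m W k =
    E1 *m (W k *m (B *m B^T)) + Qk ^+ a *m W k *m E2.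
  rewrite eL /E1 /E2 mulmxBl mulmxBr !mulmxA eQ; by rewrite addrA subrK.
have hM : opb (s * (s ^+ k * s ^+ k)) (W k *m (B *m B^T)).
  by apply: opb_mul; [apply: hW | apply: opb_mul => //; apply: opb_tr].
have hN : opb ((s ^+ 2) ^+ a * s) (Qk ^+ a *m W k).
  by apply: opb_mul; [apply: opb_pow; apply: opbQ | apply: hW].
have [_ _ hM2] := hM; have [_ hN1 _] := hN.
have eka : s ^+ k * s ^+ k = s ^+ (2 * k) by rewrite -exprD; congr (_ ^+ _); lia.
have eaa : (s ^+ 2) ^+ a = s ^+ (2 * a) by rewrite exprM.
have eL2 : s ^+ (2 * (L - 1)) = s ^+ (2 * a) * s ^+ (2 * k)
  by rewrite -exprD; congr (_ ^+ _); rewrite eL; lia.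
rewrite eka in hM2; rewrite eaa in hN1; rewrite eL2.
apply: (le_trans (frobD _ _)).
have f1 := hM2 _ E1; have f2 := hN1 _ E2.
set x := frob E1 in h1 f1; set z := frob E2 in h2 f2.
set S1 := s ^+ (2 * a) in h1 hN1 f2 *; set S2 := s ^+ (2 * k) in h2 hM2 f1 *.
have S10 : 0 <= S1 by rewrite /S1 exprn_ge0.
have S20 : 0 <= S2 by rewrite /S2 exprn_ge0.
have g1 : s * S2 * x <= S2 * (T a * S1 * eta).
  rewrite (_ : s * S2 * x = S2 * (s * x)); last by ring.
  exact: ler_wpM2l.
have g2 : S1 * s * z <= S1 * (T k * S2 * eta).
  rewrite (_ : S1 * s * z = S1 * (s * z)); last by ring.
  exact: ler_wpM2l.
apply: (le_trans (lerD f1 f2)); apply: (le_trans (lerD g1 g2)).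
rewrite [X in _ <= X](_ : _ = S2 * (T a * S1 * eta) + S1 * (T k * S2 * eta)) //; ring.
Qed.

Lemma main_k lam y k : (k < L)%N ->
  frob (lhsk L lam y W k) <= 2^-1 * frob (gradk L lam y W k)
     + (T (L - 1 - k) + T k) * s ^+ (2 * (L - 1)) * eta.
Proof.
move=> kL; rewrite lhs_split //; apply: (le_trans (frobB _ _)).
rewrite frobZ ger0_norm ?invr_ge0 ?ler0n //; apply: lerD => //.
exact: delta_bound.
Qed.

End Bounds.
Section Final.
Variable R : realType.

Lemma perm_entry n (t : 'S_n) i j : (perm_mx t : 'M[R]_n) i j = (t i == j)%:R.
Proof. by rewrite perm_mxEsub !mxE. Qed.

Lemma mxn_in m n (P : 'M[R]_(m,n)) i j (hi : (i < m)%N) (hj : (j < n)%N) :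
  mxn P i j = P (Ordinal hi) (Ordinal hj).
Proof.
rewrite /mxn; case: insubP => [i' _ ei|]; last by rewrite hi.
case: insubP => [j' _ ej|]; last by rewrite hj.
by congr (P _ _); apply: val_inj.
Qed.

Lemma opb_blkP L d m (t : 'S_(dmin L d)) : (dmin L d <= m)%N ->
  opb 1 (@blkP R L d m (perm_mx t)).
Proof.
move=> hm; set dm := dmin L d.
have nz : forall i j : 'I_m, @blkP R L d m (perm_mx t) i j != 0 ->
   (exists (hi : (i < dm)%N) (hj : (j < dm)%N), t (Ordinal hi) = Ordinal hj) \/
   ((dm <= i)%N /\ (i : nat) = j).
  move=> i j; rewrite mxE; case: ifP => [/andP[hi hj]|hn].
    rewrite (mxn_in _ hi hj) perm_entry; case e: (t (Ordinal hi) == Ordinal hj) => /=; last by rewrite eqxx.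
    by move=> _; left; exists hi, hj; apply/eqP.
  case e1: ((i : nat) == j) => /=; last by rewrite eqxx.
  move=> _; right; move/eqP: e1 => e0; split => //.
  by move: hn; rewrite e0 andbb => /negbT; rewrite -leqNgt.
apply: opb_mono => //.
- move=> i j1 j2 /nz h1 /nz h2; apply: val_inj.
  case: h1 => [[hi [hj1 e1]]|[h1 e1]]; case: h2 => [[hi' [hj2 e2]]|[h2 e2]].
  + have ee : Ordinal hi = Ordinal hi' by apply: val_inj.
    have e3 := etrans (esym e1) (etrans (congr1 t ee) e2).
    by move/(congr1 val): e3.
  + by move: (hi); rewrite ltnNge h2.
  + by move: (hi'); rewrite ltnNge h1.
  + exact: (etrans (esym e1) e2).
- move=> i1 i2 j /nz h1 /nz h2; apply: val_inj.
  case: h1 => [[hi1 [hj e1]]|[h1 e1]]; case: h2 => [[hi2 [hj' e2]]|[h2 e2]].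
  + have ee : Ordinal hj = Ordinal hj' by apply: val_inj.
    have e3 := etrans e1 (etrans ee (esym e2)).
    by move/perm_inj/(congr1 val): e3.
  + by move: (hj); rewrite ltnNge -e2 h2.
  + by move: (hj'); rewrite ltnNge -e1 h1.
  + exact: (etrans e1 (esym e2)).
- move=> i j; rewrite mxE; case: ifP => [/andP[hi hj]|_].
    by rewrite (mxn_in _ hi hj) perm_entry; case: (_ == _); rewrite ?normr1 ?normr0.
  by case: (_ == _); rewrite ?normr1 ?normr0.
Qed.

Lemma sigmax_ge0 m (sig : 'cV[R]_m) : 0 <= sigmax sig.
Proof. exact: bigmax_ge_id. Qed.

Lemma sig_le_max m (sig : 'cV[R]_m) i : sig i 0 <= sigmax sig.
Proof. exact: (le_bigmax 0 (fun i : 'I_m => sig i 0) i). Qed.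

Lemma opb_Sig L d (sig : 'cV[R]_(dmin L d)) k :
  (forall i, 0 <= sig i 0) -> opb (sigmax sig) (@Sigmak R L d sig k).
Proof.
move=> hs; apply: opb_mono; last exact: sigmax_ge0.
- move=> i j1 j2; rewrite !mxE.
  case e1: ((i : nat) == j1); last by rewrite eqxx.
  case e2: ((i : nat) == j2); last by rewrite eqxx.
  by move=> _ _; apply: val_inj; exact: (etrans (esym (eqP e1)) (eqP e2)).
- move=> i1 i2 j; rewrite !mxE.
  case e1: ((i1 : nat) == j); last by rewrite eqxx.
  case e2: ((i2 : nat) == j); last by rewrite eqxx.
  by move=> _ _; apply: val_inj; exact: (etrans (eqP e1) (esym (eqP e2))).
- move=> i j; rewrite mxE; case: ifP => _; last by rewrite normr0 sigmax_ge0.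
  rewrite /vn; case: insubP => [i' _ _|_]; last by rewrite normr0 sigmax_ge0.
  by rewrite ger0_norm // sig_le_max.
Qed.

Lemma two_le L (F : 'I_L -> R) (i1 i2 : 'I_L) : (forall i, 0 <= F i) -> i1 != i2 ->
  F i1 + F i2 <= \sum_i F i.
Proof.
move=> h0 ne; rewrite (bigD1 i1) //= (bigD1 i2) /=; last by rewrite eq_sym.
by rewrite addrA lerDl sumr_ge0.
Qed.

Lemma one_le L (F : 'I_L -> R) (i1 : 'I_L) : (forall i, 0 <= F i) -> F i1 <= \sum_i F i.
Proof. by move=> h0; rewrite (bigD1 i1) //= lerDl sumr_ge0. Qed.

Lemma le_sqrt_sq (a b : R) : 0 <= a -> a ^+ 2 <= b -> a <= Num.sqrt b.
Proof.
move=> a0 h; rewrite -(ger0_norm a0) -sqrtr_sqr ler_sqrt //.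
exact: le_trans (sqr_ge0 a) h.
Qed.

Lemma alg_id (N S G lam r : R) : r != 0 -> lam != 0 -> r * r = 2 ->
  N / 2 * S * (r * G / (2 * lam)) = S * N / (2 * r * lam) * G.
Proof.
move=> r0 l0 hr; transitivity (S * N / (2 * r * lam) * G * (r * r / 2)); first by field; rewrite l0 r0.
by rewrite hr divff ?mulr1 // pnatr_eq0.
Qed.

End Final.

Unset Implicit Arguments.

Theorem corollary3p6 (R : realType) (L : nat) (d : nat -> nat) (lam : R) (y : nat -> R)
  (sig : 'cV[R]_(dmin L d)) (W : forall k, 'M[R]_(d k.+1, d k)) :
  (2 <= L)%N ->
  0 < lam ->
  (forall i j : nat, (i <= j)%N -> (j < dmin L d)%N -> y j <= y i) ->
  (forall i : nat, (i < dmin L d)%N -> 0 <= y i) ->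
  (forall k : nat, (0 < k < L)%N -> (dmin L d <= d k)%N) ->
  inAsort lam y sig ->
  sig != 0 ->
  (exists V, inWset lam y sig V /\ tdist L W V < sigmin sig / 2) ->
  forall l : 'I_L,
    frob (lhsk L lam y W l) <= c1 L lam sig * gradnorm L lam y W.
Proof.
move=> L2 lam0 _ _ _ hsort _ [V [hV hdist]] l.
have [n eL] : exists n, L = n.+2 by exists (L - 2)%N; lia.
subst L.
have hs : forall i, 0 <= sig i 0.
  by case: hsort => _ [a [ha [t ht]]] i; rewrite ht; exact: (ha (t i)).2.
have σ0 : 0 <= sigmax sig := sigmax_ge0 sig.
have hmin : sigmin sig <= sigmax sig by exact: bigmin_le_id.
have hVop : forall k, (k < n.+2)%N -> opb (sigmax sig) (V k).
  move: hV => /= [t [_ [Q [hQ [O [Oh [hO [hOh [_ [_ [_ [eV0 [eVm eVL]]]]]]]]]]]]].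
  case=> [|k] kL.
    rewrite eV0.
    have := opb_mul (opb_mul (opb_mul (opb_orth (hQ 1%N isT)) (@opb_Sig R n.+2 d sig 0 hs))
      (@opb_blkP R n.+2 d (d 0%N) t (geq_minl _ _))) (opb_orth hO).
    by rewrite mul1r !mulr1.
  have [ek|nk] := eqVneq k n.
    subst k; rewrite eVL tr_perm_mx.
    have := opb_mul (opb_mul (opb_mul (opb_tr (opb_orth hOh))
      (@opb_blkP R n.+2 d (d n.+2) t^-1 (geq_minr _ _))) (@opb_Sig R n.+2 d sig n.+1 hs)) (opb_tr (opb_orth (hQ n.+1 _))).
    rewrite !mul1r mulr1; apply; lia.
  rewrite eVm; last by lia.
  have := opb_mul (opb_mul (opb_orth (hQ k.+2 _)) (@opb_Sig R n.+2 d sig k.+1 hs)) (opb_tr (opb_orth (hQ k.+1 _))).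
  by rewrite mul1r mulr1; apply; lia.
have hWV : forall k (kL : (k < n.+2)%N), frob (W k - V k) <= tdist n.+2 W V.
  move=> k kL; rewrite /tdist; apply: le_sqrt_sq; first exact: frob_ge0.
  exact: (one_le (F := fun i : 'I_n.+2 => frob (W i - V i) ^+ 2) (Ordinal kL) (fun i => sqr_ge0 _)).
set σ := sigmax sig in σ0 hmin hVop *.
set s := 3 * σ / 2.
have s0 : 0 <= s by rewrite /s; lra.
have hWop : forall k, (k < n.+2)%N -> opb s (W k).
  move=> k kL; rewrite -[W k](subrK (V k)).
  apply: opb_le (opb_add (opb_frob (W k - V k)) (hVop k kL)).
  have := hWV k kL; rewrite /s; lra.
set G := gradnorm n.+2 lam y W.
have G0 : 0 <= G by exact: sqrtr_ge0.
have hg : forall k (kL : (k < n.+2)%N), frob (gradk n.+2 lam y W k) <= G.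
  move=> k kL; apply: le_sqrt_sq; first exact: frob_ge0.
  exact: (one_le (F := fun i : 'I_n.+2 => frob (gradk n.+2 lam y W i) ^+ 2) (Ordinal kL) (fun i => sqr_ge0 _)).
have hg2 : forall j, (j.+1 < n.+2)%N ->
    frob (gradk n.+2 lam y W j.+1) + frob (gradk n.+2 lam y W j) <= Num.sqrt 2 * G.
  move=> j jL; rewrite /G /gradnorm -sqrtrM ?ler0n //.
  apply: le_sqrt_sq; first by apply: addr_ge0; exact: frob_ge0.
  have ne : Ordinal jL != Ordinal (ltnW jL) by rewrite -val_eqE /=; apply/eqP; lia.
  have := two_le (F := fun i : 'I_n.+2 => frob (gradk n.+2 lam y W i) ^+ 2) (fun i => sqr_ge0 _) ne.
  rewrite /=; set x := frob _; set z := frob _; move=> h.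
  have := sqr_ge0 (x - z); nra.
set eta := Num.sqrt 2 * G / (2 * lam).
have hD : forall j, (j.+1 < n.+2)%N ->
    frob ((W j.+1)^T *m W j.+1 - W j *m (W j)^T) <= s * eta.
  move=> j jL; have e := @D_ident R d W n.+2 lam y j jL.
  have h1 : frob ((2 * lam) *: ((W j.+1)^T *m W j.+1 - W j *m (W j)^T)) <= s * (Num.sqrt 2 * G).
    rewrite e; apply: (le_trans (frobB _ _)).
    have [_ a1 _] := opb_tr (hWop j.+1 jL); have [_ _ b2] := opb_tr (hWop j (ltnW jL)).
    apply: (le_trans (lerD (a1 _ _) (b2 _ _))); rewrite -mulrDr.
    by apply: ler_wpM2l => //; exact: hg2.
  have l0 : 0 < 2 * lam by rewrite mulr_gt0 ?ltr0n.
  rewrite frobZ ger0_norm in h1; last exact: ltW.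
  by rewrite /eta mulrA ler_pdivlMr // mulrC.
have key := @main_k R d W n.+2 s eta s0 hWop hD lam y l (ltn_ord l).
apply: (le_trans key).
have hc := le_bigmax 0 (fun k : 'I_n.+2 => (3 * sigmax sig / 2) ^+ (2 * n.+2 - 2)
   * ((n.+2 - k.+1) * (n.+2 - k.+1).+1 + k * k.+1)%N%:R / (2 * Num.sqrt 2 * lam) + 1 / 2) l.
apply: le_trans (ler_wpM2r G0 hc).
rewrite -/σ -/s /=.
have ee : (2 * n.+2 - 2 = 2 * (n.+2 - 1))%N by lia.
have ea : (n.+2 - 1 - l = n.+2 - l.+1)%N by lia.
rewrite ee ea.
set S := s ^+ (2 * (n.+2 - 1)).
set N := ((n.+2 - l.+1) * (n.+2 - l.+1).+1 + l * l.+1)%N.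
have eT : T R (n.+2 - l.+1) + T R l = N%:R / 2 by rewrite /T -mulrDl -natrD.
rewrite eT.
set r := Num.sqrt 2.
have r0 : 0 < r by rewrite sqrtr_gt0 ltr0n.
have hr : r * r = 2 by rewrite -expr2 sqr_sqrtr ?ler0n.
have E : N%:R / 2 * S * eta = S * N%:R / (2 * r * lam) * G.
  by rewrite /eta -/r alg_id // gt_eqF.
rewrite E [(_ + 1 / 2) * G]mulrDl addrC; apply: lerD => //.
rewrite div1r; apply: ler_wpM2l; [by rewrite invr_ge0 ler0n | exact: hg].
Qed.
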